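(* Let $X$ be a Hausdorff hereditarily disconnected space. Then $\mathcal{K}(X)$ contains a connected set with more than one point if and only if there exist a closed subset $F\subset X$ and a compact subset $K\subsetneq F$ such that $K$ intersects every quasicomponent of $F$.
   Context: $\mathcal{K}(X)$ is the set of nonempty compact subsets of $X$ with the Vietoris topology (generated by $U^+=\{A: A\subset U\}$ and $U^-=\{A: A\cap U\neq\emptyset\}$ for $U$ open in $X$). A space is hereditarily disconnected if every nonempty connected subset is a singleton. The quasicomponent of a space $F$ at $p\in F$ is the intersection of all clopen subsets of $F$ containing $p$. *)

(* Defs.v *)
From HB Require Import structures.
From mathcomp Require Import all_boot all_order.
From mathcomp Require Import all_classical all_reals all_analysis.
Set Implicit Arguments. Unset Strict Implicit. Unset Printing Implicit Defensive.
Local Open Scope classical_set_scope.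

Definition hyperspace (X : topologicalType) : Type :=
  {A : set X | compact A /\ A !=set0}.

HB.instance Definition _ (X : topologicalType) :=
  gen_eqMixin (hyperspace X).
HB.instance Definition _ (X : topologicalType) :=
  gen_choiceMixin (hyperspace X).

(** Subbasic Vietoris sets: (true, U) gives U^+ = {A | A ⊆ U},
    (false, U) gives U^- = {A | A ∩ U ≠ ∅}, for U open in X. *)
Definition vietoris_subbase (X : topologicalType) (i : bool * set X)
  : set (hyperspace X) :=
  if i.1 then [set A | sval A `<=` i.2]
  else [set A | sval A `&` i.2 !=set0].

HB.instance Definition _ (X : topologicalType) :=
  @isSubBaseTopological.Build (hyperspace X) (bool * set X)%type
    [set i | open i.2] (@vietoris_subbase X).

Definition quasicomponent (X : topologicalType) (F : set X) (p : X) : set X :=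
  \bigcap_(C in [set C : set X | [/\ (exists2 U, open U & C = F `&` U),
                                     (exists2 V, closed V & C = F `&` V) &
                                     C p]]) C.

(* Main.v *)
Require Import Defs.
From HB Require Import structures.
From mathcomp Require Import all_boot all_order.
From mathcomp Require Import all_classical all_reals all_analysis.
From mathcomp Require Import finmap.
Local Open Scope classical_set_scope.

Lemma sub_open (X : topologicalType) (i : bool * set X) : open i.2 ->
  open (vietoris_subbase i : set (hyperspace X)).
Proof.
move=> oi.
exists [set vietoris_subbase i]; last by rewrite bigcup_set1.
move=> A ->; exists (fset1 i); last by rewrite set_fset1 bigcap_set1.
move=> j; rewrite !inE => /eqP -> /=. exact/mem_set.
Qed.

Lemma plus_open (X : topologicalType) (U : set X) : open U ->
  open [set A : hyperspace X | sval A `<=` U].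
Proof. by move=> oU; exact: (@sub_open X (true, U)). Qed.

Lemma minus_open (X : topologicalType) (U : set X) : open U ->
  open [set A : hyperspace X | sval A `&` U !=set0].
Proof. by move=> oU; exact: (@sub_open X (false, U)). Qed.

Lemma hyper_eq (X : topologicalType) (A B : hyperspace X) :
  sval A = sval B -> A = B.
Proof.
case: A => A hA; case: B => B hB /= e; subst B.
by congr exist; apply: Prop_irrelevance.
Qed.

Lemma preimage_open (X T : topologicalType) (f : T -> hyperspace X) :
  (forall U, open U -> open (f @^-1` [set A | sval A `<=` U])) ->
  (forall U, open U -> open (f @^-1` [set A | sval A `&` U !=set0])) ->
  forall O, open O -> open (f @^-1` O).
Proof.
move=> hp hm O [S sS <-]; rewrite preimage_bigcup; apply: bigcup_open => A /sS.
move=> [fs fssub <-]; rewrite bigcap_fset big_seq.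
apply: (big_ind (fun S => open (f @^-1` S))).
- rewrite preimage_setT; exact: openT.
- by move=> ? ? ? ?; rewrite preimage_setI; exact: openI.
- move=> [[] U] /fssub /set_mem /= oU; [exact: hp | exact: hm].
Qed.

Lemma sep_clopen (X : topologicalType) (F M : set X) (q : X) :
  closed F -> compact M -> M `<=` F -> F q ->
  ~ (M `&` quasicomponent F q !=set0) ->
  exists W V, [/\ open W, closed V, F `&` W = F `&` V, (F `&` W) q &
     forall a, M a -> ~ (F `&` W) a].
Proof.
move=> cF cM sMF Fq nMQ.
pose Ds := [set C : set X | [/\ (exists2 U, open U & C = F `&` U),
                                (exists2 V, closed V & C = F `&` V) & C q]].
apply: contrapT => hn.
have ne : forall C, Ds C -> M `&` C !=set0.
  move=> C [[W oW eW] [V cV eV] Cq]; apply: contrapT => hC; apply: hn.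
  exists W, V; split => //; first by rewrite -eW -eV.
    by rewrite -eW.
  by move=> a Ma; rewrite -eW => Ca; apply: hC; exists a.
have DsF : Ds F.
  split => //; first by exists setT; [exact: openT | rewrite setIT].
  by exists setT; [exact: closedT | rewrite setIT].
have DsI : forall C1 C2, Ds C1 -> Ds C2 -> Ds (C1 `&` C2).
  move=> C1 C2 [[W1 oW1 eW1] [V1 cV1 eV1] q1] [[W2 oW2 eW2] [V2 cV2 eV2] q2].
  split => //.
  - exists (W1 `&` W2); first exact: openI.
    by rewrite eW1 eW2 setIACA setIid.
  - exists (V1 `&` V2); first exact: closedI.
    by rewrite eV1 eV2 setIACA setIid.
have FF : Filter (filter_from Ds (fun C => M `&` C)).
  apply: filter_from_filter; first by exists F.
  move=> C1 C2 D1 D2; exists (C1 `&` C2); first exact: DsI.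
  by move=> x [Mx [C1x C2x]]; split; split.
have PF : ProperFilter (filter_from Ds (fun C => M `&` C)).
  exact: filter_from_proper.
have [a [Ma cla]] := cM _ PF (ex_intro2 _ _ F DsF (@subIsetl _ M F)).
apply: nMQ; exists a; split => // C DC.
have cC : closed C.
  by case: DC => _ [V cV ->] _; exact: closedI.
rewrite (closure_id C).1 //.
move=> B nB.
have [y [[My Cy] By]] := cla (M `&` C) B (ex_intro2 _ _ C DC (@subset_refl _ (M `&` C))) nB.
by exists y.
Qed.

Lemma backward (X : topologicalType) (F K : set X) :
  compact K -> K `<` F ->
  (forall p, F p -> K `&` quasicomponent F p !=set0) ->
  exists C : set (hyperspace X),
       connected C /\ exists A B : hyperspace X, C A /\ C B /\ A <> B.
Proof.
move=> cK [sKF nFK] qc.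
have [p [Fp nKp]] : exists p, F p /\ ~ K p.
  apply: contrapT => h; apply: nFK => x Fx; apply: contrapT => nk.
  by apply: h; exists x.
have [k0 [Kk0 _]] := qc p Fp.
pose f (x : X) : hyperspace X := exist _ (K `|` [set x])
  (conj (compactU cK (@compact_set1 X x)) (ex_intro _ x (or_intror erefl))).
have fK : forall k, K k -> f k = f k0.
  move=> k Kk; apply: hyper_eq => /=.
  by apply/seteqP; split => y [Ky| ->]; left.
have fO : forall Op, open Op -> open (f @^-1` Op).
  apply: preimage_open => U oU.
  - have [KU|nKU] := pselect (K `<=` U).
      suff -> : f @^-1` [set A | sval A `<=` U] = U by [].
      apply/seteqP; split => x /=; first by apply; right.
      by move=> Ux y [/KU|->].
    suff -> : f @^-1` [set A | sval A `<=` U] = set0 by exact: open0.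
    apply/seteqP; split => x //= h; apply: nKU => y Ky; apply: h; by left.
  - have [KU|nKU] := pselect (K `&` U !=set0).
      suff -> : f @^-1` [set A | sval A `&` U !=set0] = setT by exact: openT.
      apply/seteqP; split => x //= _; case: KU => y [Ky Uy]; exists y; split => //; by left.
    suff -> : f @^-1` [set A | sval A `&` U !=set0] = U by [].
    apply/seteqP; split => x /=.
      move=> [y [[Ky|->] Uy]] //; by exfalso; apply: nKU; exists y.
    by move=> Ux; exists x; split => //; right.
exists (f @` F); split; last first.
  exists (f k0), (f p); split; first by exists k0 => //; apply: sKF.
  split; first by exists p.
  move=> e; have : sval (f p) p by right.
  rewrite -e => -[//|pk0]; by apply: nKp; rewrite pk0.
move=> B [y yB] [Op oOp BOp] [D cD BD].
have key : forall x, F x -> exists2 k, K k & (B (f x) <-> B (f k)).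
  move=> x Fx.
  have eOp : forall z, F z -> (B (f z) <-> Op (f z)).
    move=> z Fz; rewrite BOp; split => [[] //|Oz]; split => //; by exists z.
  have eD : forall z, F z -> (B (f z) <-> D (f z)).
    move=> z Fz; rewrite BD; split => [[] //|Dz]; split => //; by exists z.
  have [k [Kk Qk]] := qc x Fx.
  exists k => //.
  have [Bx|nBx] := pselect (B (f x)).
    have : (F `&` f @^-1` Op) k.
      apply: Qk; split.
      - by exists (f @^-1` Op) => //; exact: fO.
      - exists (f @^-1` D); first by rewrite -openC preimage_setC; apply: fO; rewrite openC.
        apply/seteqP; split => z [Fz h]; split => //.
          by apply/(eD z Fz); apply/(eOp z Fz).
        by apply/(eOp z Fz); apply/(eD z Fz).
      - by split => //; apply/(eOp x Fx).
    by move=> [Fk Ok]; split => // _; apply/(eOp k Fk).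
  have : (F `&` ~` (f @^-1` D)) k.
    apply: Qk; split.
    - exists (~` (f @^-1` D)) => //; first by rewrite preimage_setC; apply: fO; rewrite openC.
    - exists (~` (f @^-1` Op)); first by rewrite closedC; exact: fO.
      apply/seteqP; split => z [Fz h]; split => // hh; apply: h.
        exact: (proj1 (eD z Fz) (proj2 (eOp z Fz) hh)).
      exact: (proj1 (eOp z Fz) (proj2 (eD z Fz) hh)).
    - split => // hD; apply: nBx; exact/(eD x Fx).
  move=> [Fk nDk]; split => // Bk; exfalso; apply: nDk; exact/(eD k Fk).
have Bk0 : B (f k0).
  have : ((f @` F) `&` Op) y by rewrite -BOp.
  move=> -[[z Fz zy] _]; rewrite -zy in yB.
  have [k Kk [h _]] := key z Fz; rewrite -(fK k Kk); exact: h yB.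
apply/seteqP; split; first by rewrite BOp => ? [].
move=> _ [x Fx <-]; have [k Kk [_ h]] := key x Fx; apply: h; by rewrite (fK k Kk).
Qed.

Lemma forward (X : topologicalType) (C : set (hyperspace X)) (A B : hyperspace X) :
  connected C -> C A -> C B -> A <> B ->
  exists F K : set X,
       [/\ closed F, compact K, K `<` F &
           forall p, F p -> K `&` quasicomponent F p !=set0].
Proof.
move=> conC CA CB nAB.
pose U := \bigcup_(D in C) sval D.
pose F := closure U.
have cF : closed F by exact: closed_closure.
have sub : forall D, C D -> sval D `<=` F.
  by move=> D CD x Dx; apply: subset_closure; exists D.
have main : forall M, C M -> forall q, F q -> sval M `&` quasicomponent F q !=set0.
  move=> M CM q Fq; apply: contrapT => nMQ.
  have [W [V [oW cV eWV Wq sep]]] :=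
    @sep_clopen X F (sval M) q cF (proj1 (proj2_sig M)) (sub M CM) Fq nMQ.
  pose S := [set D : hyperspace X | sval D `&` W !=set0].
  have eqS : forall D, C D -> (S D <-> ~ (sval D `<=` ~` V)).
    move=> D CD; split.
      move=> [y [Dy Wy]] h; apply: (h y Dy).
      have : (F `&` V) y by rewrite -eWV; split => //; exact: sub CD y Dy.
      by case.
    move=> h; apply: contrapT => nS; apply: h => y Dy Vy; apply: nS.
    have : (F `&` W) y by rewrite eWV; split => //; exact: sub CD y Dy.
    by case => _ Wy; exists y.
  have empty : ~ ((C `&` S) !=set0).
    move=> ne.
    have e := conC (C `&` S) ne (ex_intro2 _ _ S (@minus_open X W oW) erefl).
    have : C `&` S = C `&` ~` [set D : hyperspace X | sval D `<=` ~` V].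
      apply/seteqP; split => D [CD h]; split => //; first exact/(eqS D CD).
      exact/(eqS D CD).
    move=> e2; have {e2}e := e (ex_intro2 _ _ _ (open_closedC (@plus_open X _ (closed_openC cV))) e2).
    have : (C `&` S) M by rewrite e.
    move=> [_ [y [My Wy]]]; apply: (sep y My); split => //; exact: sub CM y My.
  have : U `&` W !=set0.
    have Wq' : W q by case: Wq.
    exact: Fq W (open_nbhs_nbhs (conj oW Wq')).
  move=> [y [[D CD Dy] Wy]]; apply: empty; exists D; split => //; by exists y.
have [eA|nA] := pselect (sval A = F).
  exists F, (sval B); split => //; first exact: (proj1 (proj2_sig B)).
    split; first exact: sub.
    move=> h; apply: nAB; apply: hyper_eq; rewrite eA; apply/seteqP; split => //.
    exact: sub.
  exact: main.
exists F, (sval A); split => //; first exact: (proj1 (proj2_sig A)).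
  split; first exact: sub.
  move=> h; apply: nA; apply/seteqP; split => //; exact: sub.
exact: main.
Qed.

Theorem proposition7p1 (X : topologicalType) :
  hausdorff_space X -> totally_disconnected [set: X] ->
  ((exists C : set (hyperspace X),
       connected C /\ exists A B : hyperspace X, C A /\ C B /\ A <> B)
   <->
   (exists F K : set X,
       [/\ closed F, compact K, K `<` F &
           forall p, F p -> K `&` quasicomponent F p !=set0])).
Proof.
move=> _ _; split.
  by move=> [C [conC [A [B [CA [CB nAB]]]]]]; exact: (@forward X C A B).
by move=> [F [K [_ cK pKF qc]]]; exact: (@backward X F K).
Qed.
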